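(* Let $(Q,\cdot)$ be a quasigroup and consider its six parastrophic operations $\cdot,\circ_1,\circ_2,\circ_3,\circ_4,\circ_5$. Then $(Q,\cdot)$ is medial if and only if any pair of its parastrophic binary operations satisfies the interchange law; more precisely, if $(Q,\cdot)$ is medial then for every (not necessarily distinct) pair $\ast,\star$ of these six operations, $(x\ast y)\star(z\ast w)=(x\star z)\ast(y\star w)$ for all $x,y,z,w\in Q$, and conversely if this holds for some such pair $\ast,\star$ then $(Q,\cdot)$ is medial.
   Context: A quasigroup is a magma $(Q,\cdot)$ in which for all $a,b$ the equations $ax=b$, $ya=b$ have unique solutions. It is medial if $(xy)(zw)=(xz)(yw)$ for all $x,y,z,w$. The parastrophes of $(Q,\cdot)$ are the operations defined by: $x\circ_1 y=z\iff xz=y$; $x\circ_2 y=z\iff zy=x$; $x\circ_3 y=z\iff zx=y$; $x\circ_4 y=z\iff yz=x$; $x\circ_5 y=z\iff yx=z$. *)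

(* Defs.v *)
Set Implicit Arguments.

Definition quasigroup (Q : Type) (mul : Q -> Q -> Q) : Prop :=
  (forall a b : Q, exists! x : Q, mul a x = b) /\
  (forall a b : Q, exists! y : Q, mul y a = b).

Definition medial (Q : Type) (mul : Q -> Q -> Q) : Prop :=
  forall x y z w : Q, mul (mul x y) (mul z w) = mul (mul x z) (mul y w).

(* The six parastrophes: P0 is the operation itself, P1..P5 are o_1..o_5. *)
Inductive para : Type := P0 | P1 | P2 | P3 | P4 | P5.

Definition is_parastrophe (Q : Type) (mul : Q -> Q -> Q) (p : para)
  (op : Q -> Q -> Q) : Prop :=
  forall x y z : Q,
    op x y = z <->
    match p with
    | P0 => mul x y = z
    | P1 => mul x z = y
    | P2 => mul z y = x
    | P3 => mul z x = y
    | P4 => mul y z = x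
    | P5 => mul y x = z
    end.

Definition interchange (Q : Type) (star ast : Q -> Q -> Q) : Prop :=
  forall x y z w : Q,
    ast (star x y) (star z w) = star (ast x z) (ast y w).

(* Main.v *)
Require Import Defs.

Section S.
Variable Q : Type.

Definition Cl (R : Q -> Q -> Q -> Prop) (f : Q -> Q -> Q) : Prop :=
  forall x y s x' y' s', R x y s -> R x' y' s' -> R (f x x') (f y y') (f s s').

Definition Gr (h : Q -> Q -> Q) : Q -> Q -> Q -> Prop := fun x y z => h x y = z.

Lemma cl_eq h f g : Cl (Gr h) f -> (forall x y z, g x y = z <-> f x y = z) -> Cl (Gr h) g.
Proof.
  unfold Cl, Gr; intros Hc Hg x y s x' y' s' E1 E2.
  assert (K : forall u v, g u v = f u v) by (intros; apply Hg; reflexivity).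
  rewrite !K; apply Hc; auto.
Qed.

Lemma cl_T h f g : Cl (Gr h) f -> (forall x y z, g x y = z <-> f y x = z) -> Cl (Gr h) g.
Proof.
  unfold Cl, Gr; intros Hc Hg x y s x' y' s' E1 E2.
  assert (K : forall u v, g u v = f v u) by (intros; apply Hg; reflexivity).
  rewrite !K; apply Hc; auto.
Qed.

Lemma cl_L h f g : Cl (Gr h) f -> (forall x y z, g x y = z <-> f x z = y) -> Cl (Gr h) g.
Proof.
  unfold Cl, Gr; intros Hc Hg x y s x' y' s' E1 E2.
  assert (Ha : f x (g x x') = x') by (apply Hg; reflexivity).
  assert (Hb : f y (g y y') = y') by (apply Hg; reflexivity).
  pose proof (Hc x y s (g x x') (g y y') (h (g x x') (g y y')) E1 eq_refl) as Ht.
  rewrite Ha, Hb, E2 in Ht.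
  symmetry; apply Hg; auto.
Qed.

Lemma cl_R h f g : Cl (Gr h) f -> (forall x y z, g x y = z <-> f z y = x) -> Cl (Gr h) g.
Proof.
  unfold Cl, Gr; intros Hc Hg x y s x' y' s' E1 E2.
  assert (Ha : f (g x x') x' = x) by (apply Hg; reflexivity).
  assert (Hb : f (g y y') y' = y) by (apply Hg; reflexivity).
  pose proof (Hc (g x x') (g y y') (h (g x x') (g y y')) x' y' s' eq_refl E2) as Ht.
  rewrite Ha, Hb, E1 in Ht.
  symmetry; apply Hg; auto.
Qed.
End S.
Arguments cl_eq {Q h f g}.
Arguments cl_T {Q h f g}.
Arguments cl_L {Q h f g}.
Arguments cl_R {Q h f g}.
Arguments Cl {Q}.
Arguments Gr {Q}.

Ltac perm_step hops a :=
  let x := fresh in let y := fresh in let s := fresh in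
  let x' := fresh in let y' := fresh in let s' := fresh in
  let E1 := fresh in let E2 := fresh in
  intros x y s x' y' s' E1 E2; unfold Gr in *;
  apply (hops _); apply (hops _) in E1; apply (hops _) in E2; simpl in *.

Theorem theorem7p1 (Q : Type) (mul : Q -> Q -> Q) (hq : quasigroup mul)
  (ops : para -> Q -> Q -> Q)
  (hops : forall p : para, is_parastrophe mul p (ops p)) :
  (medial mul -> forall a b : para, interchange (ops a) (ops b)) /\
  (forall a b : para, interchange (ops a) (ops b) -> medial mul).
Proof.
  split.
  - intros Hm a b.
    assert (C0 : Cl (Gr mul) mul).
    { unfold Cl, Gr; intros x y s x' y' s' E1 E2; subst; symmetry; apply Hm. }
    assert (C1 : Cl (Gr mul) (ops b)).
    { destruct b.
      - apply (cl_eq C0); intros; apply (hops P0).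
      - apply (cl_L C0); intros; apply (hops P1).
      - apply (cl_R C0); intros; apply (hops P2).
      - apply (cl_L (f := fun u v => mul v u)).
        + apply (cl_T C0); intros; tauto.
        + intros; apply (hops P3).
      - apply (cl_R (f := fun u v => mul v u)).
        + apply (cl_T C0); intros; tauto.
        + intros; apply (hops P4).
      - apply (cl_T C0); intros; apply (hops P5). }
    assert (C2 : Cl (Gr (ops a)) (ops b)).
    { destruct a; intros x y s x' y' s' E1 E2; unfold Gr in *; apply (hops _) in E1; apply (hops _) in E2; apply (hops _); simpl in *; eapply C1; eauto. }
    intros x y z w; symmetry; apply (C2 x y _ z w _ eq_refl eq_refl).
  - intros a b Hi.
    assert (C1 : Cl (Gr (ops a)) (ops b)).
    { unfold Cl, Gr; intros x y s x' y' s' E1 E2; subst; symmetry; apply Hi. }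
    assert (C2 : Cl (Gr (ops a)) mul).
    { destruct b.
      - apply (cl_eq C1); intros; split; intro; apply (hops P0); auto.
      - apply (cl_L C1); intros; split; intro; apply (hops P1); auto.
      - apply (cl_R C1); intros; split; intro; apply (hops P2); auto.
      - apply (cl_R (f := fun u v => ops P3 v u)).
        + apply (cl_T C1); intros; tauto.
        + intros; split; intro; apply (hops P3); auto.
      - apply (cl_L (f := fun u v => ops P4 v u)).
        + apply (cl_T C1); intros; tauto.
        + intros; split; intro; apply (hops P4); auto.
      - apply (cl_T C1); intros; split; intro; apply (hops P5); auto. }
    assert (C3 : Cl (Gr mul) mul).
    { intros x y s x' y' s' E1 E2; unfold Gr in *; destruct a.
      - pose proof (proj2 (hops P0 x y s) E1) as F1; pose proof (proj2 (hops P0 x' y' s') E2) as F2;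
        pose proof (C2 _ _ _ _ _ _ F1 F2) as F; apply (hops P0) in F; exact F.
      - pose proof (proj2 (hops P1 x s y) E1) as F1; pose proof (proj2 (hops P1 x' s' y') E2) as F2;
        pose proof (C2 _ _ _ _ _ _ F1 F2) as F; apply (hops P1) in F; exact F.
      - pose proof (proj2 (hops P2 s y x) E1) as F1; pose proof (proj2 (hops P2 s' y' x') E2) as F2;
        pose proof (C2 _ _ _ _ _ _ F1 F2) as F; apply (hops P2) in F; exact F.
      - pose proof (proj2 (hops P3 y s x) E1) as F1; pose proof (proj2 (hops P3 y' s' x') E2) as F2;
        pose proof (C2 _ _ _ _ _ _ F1 F2) as F; apply (hops P3) in F; exact F.
      - pose proof (proj2 (hops P4 s x y) E1) as F1; pose proof (proj2 (hops P4 s' x' y') E2) as F2;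
        pose proof (C2 _ _ _ _ _ _ F1 F2) as F; apply (hops P4) in F; exact F.
      - pose proof (proj2 (hops P5 y x s) E1) as F1; pose proof (proj2 (hops P5 y' x' s') E2) as F2;
        pose proof (C2 _ _ _ _ _ _ F1 F2) as F; apply (hops P5) in F; exact F.
    }
    intros x y z w; apply (C3 x z _ y w _ eq_refl eq_refl).
Qed.
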